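(* Consider the binary state-dependent channel with $\mathcal{X}=\mathcal{S}=\mathcal{Y}=\mathcal{Z}=\{0,1\}$, $P_S=\mathrm{Bernoulli}(p)$ with $p\in(0,\tfrac12)$, channel law $Y=Z=X\oplus S$ (modulo-2 addition), no-input symbol $x_0=0$, secret-key rate $R_K>0$, and no binding cost constraint (e.g. $b\equiv 0$). Then the covert capacities with causal and with noncausal CSI at the transmitter are $$C_{\mathrm{c}}=C_{\mathrm{nc}}=H_{\mathrm b}(p)=p\log\frac1p+(1-p)\log\frac1{1-p}.$$
   Context: A state-dependent discrete memoryless channel consists of finite alphabets $\mathcal{X},\mathcal{S},\mathcal{Y},\mathcal{Z}$, state PMF $P_S$ and channel law $P_{Y,Z|S,X}$; states $S^n$ are IID $\sim P_S$, known to the transmitter (causally: $X_i$ depends on $(M,K,S^i)$; noncausally: $X^n$ depends on $(M,K,S^n)$; in both cases possibly also on private randomness) but not to the receiver or warden. $Q_0(z)=\sum_s P_S(s)P_{Z|S,X}(z|s,x_0)$. Key $K$ uniform on $[1:2^{nR_K}]$ and message $M$ uniform on $[1:2^{nR}]$ are independent of each other and of $S^n$; the decoder maps $(Y^n,K)$ to $\hat M$. A rate $R$ is achievable if there are codes with $\limsup_n \mathrm{E}[\frac1n\sum_i b(X_i)]\le B$, $P(\hat M\neq M)\to0$ and $D(\widehat{P}_{Z^n}\|Q_0^{\times n})\to0$, where $\widehat{P}_{Z^n}$ is the warden's output distribution induced by the code; the covert capacity $C_{\mathrm{c}}$ (causal) or $C_{\mathrm{nc}}$ (noncausal) is the supremum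 of achievable rates. *)

(* Defs.v *)
From Stdlib Require Import Reals List Bool.
Import ListNotations.
Open Scope R_scope.

Definition sumL {A : Type} (l : list A) (f : A -> R) : R :=
  fold_right (fun a acc => f a + acc) 0 l.

Fixpoint allseq (n : nat) : list (list bool) :=
  match n with
  | O => [[]]
  | S n' => flat_map (fun t => [false :: t; true :: t]) (allseq n')
  end.

Definition listb_eqb (a b : list bool) : bool :=
  if list_eq_dec bool_dec a b then true else false.

Definition log2 (x : R) : R := ln x / ln 2.

Definition Hb (p : R) : R := p * log2 (1 / p) + (1 - p) * log2 (1 / (1 - p)).

(* IID Bernoulli(p) law of a state sequence (1 = true) *)
Definition PSn (p : R) (s : list bool) : R :=
  fold_right (fun (b : bool) (acc : R) => (if b then p else 1 - p) * acc) 1 s.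

(* channel Y = Z = X xor S, componentwise *)
Definition xorseq (x s : list bool) : list bool := map (fun ab : bool * bool => xorb (fst ab) (snd ab)) (combine x s).

(* A length-n code: number of messages cM (message uniform on 0..cM-1),
   number of keys cK (key uniform on 0..cK-1), a stochastic encoder
   cenc m k s x = P(X^n = x | M = m, K = k, S^n = s) (private randomness is
   absorbed into this kernel), and a decoder cdec y k = estimate of m. *)
Record Code := mkCode {
  cM : nat;
  cK : nat;
  cenc : nat -> nat -> list bool -> list bool -> R;
  cdec : list bool -> nat -> nat }.

Definition enc_kernel (n : nat) (c : Code) : Prop :=
  (forall m k s x, (0 <= cenc c m k s x)) /\
  (forall m k s, (m < cM c)%nat -> (k < cK c)%nat -> In s (allseq n) ->
     sumL (allseq n) (fun x => cenc c m k s x) = 1).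

(* causality: the law of X^i given (m,k,S^n) depends only on S^i, for every i;
   equivalently X_i is generated from (M,K,S^i) and private randomness. *)
Definition causal (n : nat) (c : Code) : Prop :=
  forall m k s s' (i : nat) (xp : list bool),
    In s (allseq n) -> In s' (allseq n) -> firstn i s = firstn i s' ->
    sumL (allseq n) (fun x => if listb_eqb (firstn i x) xp then cenc c m k s x else 0)
    = sumL (allseq n) (fun x => if listb_eqb (firstn i x) xp then cenc c m k s' x else 0).

Definition code_sizes (n : nat) (R0 RK : R) (c : Code) : Prop :=
  (1 <= cK c)%nat /\ INR (cK c) <= Rpower 2 (INR n * RK) /\
  (1 <= cM c)%nat /\ Rpower 2 (INR n * R0) <= INR (cM c).

Definition avgMK (c : Code) (f : nat -> nat -> R) : R :=
  / (INR (cM c) * INR (cK c)) *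
  sumL (seq 0 (cM c)) (fun m => sumL (seq 0 (cK c)) (fun k => f m k)).

Definition Perr (n : nat) (p : R) (c : Code) : R :=
  avgMK c (fun m k => sumL (allseq n) (fun s => PSn p s *
     sumL (allseq n) (fun x => cenc c m k s x *
        (if Nat.eqb (cdec c (xorseq x s) k) m then 0 else 1)))).

Definition PZhat (n : nat) (p : R) (c : Code) (z : list bool) : R :=
  avgMK c (fun m k => sumL (allseq n) (fun s => PSn p s *
     sumL (allseq n) (fun x => cenc c m k s x *
        (if listb_eqb (xorseq x s) z then 1 else 0)))).

(* Q0(z) = sum_s P_S(s) P_{Z|S,X}(z|s,0) = P_S(z); Q0^{x n} *)
Definition Q0n (p : R) (z : list bool) : R := PSn p z.

Definition KLn (n : nat) (p : R) (c : Code) : R :=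
  sumL (allseq n) (fun z =>
    if Rlt_le_dec 0 (PZhat n p c z)
    then PZhat n p c z * log2 (PZhat n p c z / Q0n p z) else 0).

(* achievability; causal = true for causal CSI, false for noncausal CSI.
   The cost constraint is vacuous (b = 0) and hence omitted. *)
Definition achievable (is_causal : bool) (p RK R0 : R) : Prop :=
  0 <= R0 /\
  exists codes : nat -> Code,
    (forall n, enc_kernel n (codes n) /\ code_sizes n R0 RK (codes n) /\
               (if is_causal then causal n (codes n) else True)) /\
    Un_cv (fun n => Perr n p (codes n)) 0 /\
    Un_cv (fun n => KLn n p (codes n)) 0.

(* Main.v *)
Require Import Defs.
From Stdlib Require Import Reals Lra Lia List Bool Arith ZArith IndefiniteDescription.
Import ListNotations.
Open Scope R_scope.

Lemma sumL_nil {A} (f : A -> R) : sumL [] f = 0.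
Proof. reflexivity. Qed.
Lemma sumL_cons {A} (a : A) l f : sumL (a :: l) f = f a + sumL l f.
Proof. reflexivity. Qed.
Lemma sumL_app {A} (l1 l2 : list A) f : sumL (l1 ++ l2) f = sumL l1 f + sumL l2 f.
Proof. induction l1; simpl; [ring|]. unfold sumL in *; simpl. rewrite IHl1; ring. Qed.
Lemma sumL_plus {A} (l : list A) f g : sumL l (fun x => f x + g x) = sumL l f + sumL l g.
Proof. induction l; unfold sumL in *; simpl; [ring|]. rewrite IHl; ring. Qed.
Lemma sumL_minus {A} (l : list A) f g : sumL l (fun x => f x - g x) = sumL l f - sumL l g.
Proof. induction l; unfold sumL in *; simpl; [ring|]. rewrite IHl; ring. Qed.
Lemma sumL_scal {A} (l : list A) c f : sumL l (fun x => c * f x) = c * sumL l f.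
Proof. induction l; unfold sumL in *; simpl; [ring|]. rewrite IHl; ring. Qed.
Lemma sumL_scalr {A} (l : list A) c f : sumL l (fun x => f x * c) = sumL l f * c.
Proof. induction l; unfold sumL in *; simpl; [ring|]. rewrite IHl; ring. Qed.
Lemma sumL_ext_in {A} (l : list A) f g : (forall x, In x l -> f x = g x) -> sumL l f = sumL l g.
Proof. induction l; intros H; unfold sumL in *; simpl; auto.
  rewrite H by (left; auto). rewrite IHl; auto. intros; apply H; right; auto. Qed.
Lemma sumL_ext {A} (l : list A) f g : (forall x, f x = g x) -> sumL l f = sumL l g.
Proof. intros; apply sumL_ext_in; auto. Qed.
Lemma sumL_le {A} (l : list A) f g : (forall x, In x l -> f x <= g x) -> sumL l f <= sumL l g.
Proof. induction l; intros H; unfold sumL in *; simpl; [lra|].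
  assert (f a <= g a) by (apply H; left; auto).
  assert (fold_right (fun a0 acc => f a0 + acc) 0 l <= fold_right (fun a0 acc => g a0 + acc) 0 l)
   by (apply IHl; intros; apply H; right; auto). lra. Qed.
Lemma sumL_zero {A} (l : list A) f : (forall x, In x l -> f x = 0) -> sumL l f = 0.
Proof. induction l; intros H; unfold sumL in *; simpl; auto.
  rewrite H by (left; auto). rewrite IHl; [ring|]. intros; apply H; right; auto. Qed.
Lemma sumL_nonneg {A} (l : list A) f : (forall x, In x l -> 0 <= f x) -> 0 <= sumL l f.
Proof. intros H. rewrite <- (sumL_zero l (fun _ => 0)) by auto.
  apply sumL_le; auto. Qed.
Lemma sumL_swap {A B} (l1 : list A) (l2 : list B) (f : A -> B -> R) :
  sumL l1 (fun a => sumL l2 (fun b => f a b)) = sumL l2 (fun b => sumL l1 (fun a => f a b)).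
Proof. induction l1; simpl.
  - rewrite sumL_zero; auto.
  - change (sumL (a :: l1) (fun a0 => sumL l2 (fun b => f a0 b))) with
      (sumL l2 (fun b => f a b) + sumL l1 (fun a0 => sumL l2 (fun b => f a0 b))).
    rewrite IHl1, <- sumL_plus. apply sumL_ext; intros; reflexivity. Qed.
Lemma sumL_const {A} (l : list A) c : sumL l (fun _ => c) = INR (length l) * c.
Proof. induction l; unfold sumL in *; simpl; [ring|]. rewrite IHl.
  destruct (length l); simpl; ring. Qed.
Lemma sumL_flat_map {A B} (g : A -> list B) l f :
  sumL (flat_map g l) f = sumL l (fun a => sumL (g a) f).
Proof. induction l; simpl; auto. rewrite sumL_app, IHl. reflexivity. Qed.
Lemma sumL_in_le {A} (l : list A) f x : (forall y, In y l -> 0 <= f y) -> In x l -> f x <= sumL l f.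
Proof. induction l; intros H Hx; simpl in Hx; [contradiction|]. rewrite sumL_cons.
  destruct Hx as [<-|Hx].
  - assert (0 <= sumL l f) by (apply sumL_nonneg; intros; apply H; right; auto). lra.
  - assert (0 <= f a) by (apply H; left; auto). assert (f x <= sumL l f); [|lra].
    apply IHl; auto. intros; apply H; right; auto. Qed.

Lemma sumL_allseq_S n f :
  sumL (allseq (S n)) f = sumL (allseq n) (fun t => f (false :: t) + f (true :: t)).
Proof. simpl. rewrite sumL_flat_map. apply sumL_ext; intros; simpl.
  unfold sumL; simpl; ring. Qed.

Lemma In_allseq n y : In y (allseq n) <-> length y = n.
Proof. revert y; induction n; intros y; simpl.
  - split; [intros [<-|[]]; auto | destruct y; simpl; auto; discriminate].
  - rewrite in_flat_map. split.
    + intros [t [Ht Hy]]. apply IHn in Ht. simpl in Hy; destruct Hy as [<-|[<-|[]]]; simpl; auto.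
    + destruct y as [|b t]; simpl; [discriminate|]. intros H; injection H; intros H'.
      exists t; split; [apply IHn; auto|]. destruct b; simpl; auto.
Qed.

Lemma NoDup_allseq n : NoDup (allseq n).
Proof. induction n; simpl. constructor; [simpl; auto| constructor].
  induction (allseq n) as [|t l IH]; simpl; [constructor|].
  inversion IHn; subst.
  assert (Hn : forall b, ~ In (b :: t) (flat_map (fun t0 => [false :: t0; true :: t0]) l)).
  { intros b H. rewrite in_flat_map in H. destruct H as [t' [Ht' H]]. simpl in H.
    destruct H as [H|[H|[]]]; injection H; intros; subst; contradiction. }
  constructor.
  - simpl. intros [H|H]; [discriminate|]. apply (Hn false); auto.
  - constructor; [apply Hn|]. apply IH; auto.
Qed.

Lemma listb_eqb_true a b : listb_eqb a b = true <-> a = b.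
Proof. unfold listb_eqb; destruct (list_eq_dec bool_dec a b); split; intros; congruence. Qed.
Lemma listb_eqb_refl a : listb_eqb a a = true.
Proof. apply listb_eqb_true; auto. Qed.
Lemma listb_eqb_neq a b : a <> b -> listb_eqb a b = false.
Proof. intros H; destruct (listb_eqb a b) eqn:E; auto. apply listb_eqb_true in E; contradiction. Qed.

Lemma sum_indicator l z (g : list bool -> R) : NoDup l -> In z l ->
  sumL l (fun y => if listb_eqb y z then g y else 0) = g z.
Proof. induction l as [|a l IH]; intros Hd Hz; [destruct Hz|]. inversion Hd; subst.
  rewrite sumL_cons. destruct Hz as [<-|Hz].
  - rewrite listb_eqb_refl. rewrite sumL_zero; [ring|].
    intros y Hy. rewrite listb_eqb_neq; auto. intros ->; contradiction.
  - rewrite listb_eqb_neq by (intros ->; contradiction). rewrite IH; auto; ring. Qed.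

Lemma xorseq_cons b t c s : xorseq (b :: t) (c :: s) = xorb b c :: xorseq t s.
Proof. reflexivity. Qed.

Lemma xor_change n s f : length s = n ->
  sumL (allseq n) (fun x => f (xorseq x s)) = sumL (allseq n) f.
Proof. revert s f; induction n; intros s f Hs.
  - destruct s; [|discriminate]. simpl. unfold sumL; simpl. reflexivity.
  - destruct s as [|c s]; [discriminate|]. simpl in Hs; injection Hs; intros Hs'.
    rewrite !sumL_allseq_S.
    rewrite (sumL_ext _ _ (fun t => (fun u => f (xorb false c :: u) + f (xorb true c :: u)) (xorseq t s)))
      by (intros; rewrite !xorseq_cons; reflexivity).
    rewrite (IHn s (fun u => f (xorb false c :: u) + f (xorb true c :: u))) by auto.
    apply sumL_ext; intros; destruct c; simpl; ring. Qed.

Lemma xorseq_length x s : length (xorseq x s) = Nat.min (length x) (length s).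
Proof. unfold xorseq. rewrite length_map, length_combine. reflexivity. Qed.

Lemma xorseq_allseq n x s : In x (allseq n) -> In s (allseq n) -> In (xorseq x s) (allseq n).
Proof. rewrite !In_allseq. intros H1 H2. rewrite xorseq_length, H1, H2. apply Nat.min_id. Qed.

Lemma xorseq_firstn i x s : firstn i (xorseq x s) = xorseq (firstn i x) (firstn i s).
Proof. revert x s; induction i; intros x s; simpl; auto.
  destruct x, s; simpl; auto; rewrite xorseq_cons, <- IHi; reflexivity. Qed.

Lemma xorseq_invol x s : length x = length s -> xorseq (xorseq x s) s = x.
Proof. revert s; induction x; intros s H; destruct s; simpl in H; try discriminate; auto.
  injection H; intros H'. rewrite !xorseq_cons, IHx by auto. f_equal. destruct a, b; auto. Qed.

Fixpoint wt (y : list bool) : nat := match y with [] => O | b :: t => ((if b then 1 else 0) + wt t)%nat end.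

Section Bern.
Variable p : R.
Hypothesis Hp : 0 < p < 1.

Lemma PSn_cons b t : PSn p (b :: t) = (if b then p else 1 - p) * PSn p t.
Proof. reflexivity. Qed.

Lemma PSn_pos y : 0 < PSn p y.
Proof. induction y; simpl; [lra|]. apply Rmult_lt_0_compat; auto. destruct a; lra. Qed.

Lemma PSn_sum n : sumL (allseq n) (PSn p) = 1.
Proof. induction n; [unfold sumL; simpl; ring|]. rewrite sumL_allseq_S.
  rewrite (sumL_ext _ _ (fun t => 1 * PSn p t)) by (intros; rewrite !PSn_cons; ring).
  rewrite sumL_scal, IHn; ring. Qed.

Lemma PSn_m1 n : sumL (allseq n) (fun t => PSn p t * INR (wt t)) = INR n * p.
Proof. induction n; [unfold sumL; simpl; ring|]. rewrite sumL_allseq_S.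
  rewrite (sumL_ext _ _ (fun t => PSn p t * INR (wt t) + p * PSn p t))
    by (intros; rewrite !PSn_cons; simpl wt; rewrite S_INR; ring).
  rewrite sumL_plus, sumL_scal, IHn, PSn_sum, S_INR; ring. Qed.

Lemma PSn_m2 n : sumL (allseq n) (fun t => PSn p t * (INR (wt t))^2) = INR n * p + INR n * (INR n - 1) * p^2.
Proof. induction n; [unfold sumL; simpl; ring|]. rewrite sumL_allseq_S.
  rewrite (sumL_ext _ _ (fun t => PSn p t * (INR (wt t))^2 + (2 * p) * (PSn p t * INR (wt t)) + p * PSn p t))
    by (intros; rewrite !PSn_cons; simpl wt; rewrite S_INR; ring).
  rewrite !sumL_plus, !sumL_scal, IHn, PSn_m1, PSn_sum, S_INR; ring. Qed.

Lemma PSn_var n : sumL (allseq n) (fun t => PSn p t * (INR (wt t) - INR n * p)^2) = INR n * p * (1 - p).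
Proof. rewrite (sumL_ext _ _ (fun t => PSn p t * (INR (wt t))^2 + (-2 * INR n * p) * (PSn p t * INR (wt t))
     + (INR n * p)^2 * PSn p t)) by (intros; ring).
  rewrite !sumL_plus, !sumL_scal, PSn_m2, PSn_m1, PSn_sum; ring. Qed.

Lemma ln_PSn y : ln (PSn p y) = INR (wt y) * ln p + (INR (length y) - INR (wt y)) * ln (1 - p).
Proof. induction y; simpl PSn; simpl wt; simpl length. simpl; rewrite ln_1; ring.
  assert (Hb : 0 < (if a then p else 1 - p)) by (destruct a; lra).
  rewrite ln_mult by (auto || apply PSn_pos).
  rewrite IHy, S_INR. destruct a; cbn [Nat.add]; try rewrite S_INR; ring. Qed.

Lemma wt_le y : (wt y <= length y)%nat.
Proof. induction y; simpl; auto. destruct a; lia. Qed.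

End Bern.

Lemma NoDup_app_disj {A} (l1 l2 : list A) y : NoDup (l1 ++ l2) -> In y l2 -> ~ In y l1.
Proof. induction l1; simpl; intros Hd Hy; auto. inversion Hd; subst. intros [<-|H].
  - apply H1, in_or_app; right; auto.
  - apply IHl1; auto. Qed.

Lemma prefix_split (f : list bool -> R) tau : forall l a, 0 < a -> (forall y, 0 <= f y <= tau) ->
  a <= sumL l f -> exists l1 l2, l = l1 ++ l2 /\ a <= sumL l1 f /\ sumL l1 f <= a + tau.
Proof. induction l as [|y l IH]; intros a Ha Hf Hs.
  - unfold sumL in Hs; simpl in Hs; lra.
  - rewrite sumL_cons in Hs. destruct (Rle_lt_dec a (f y)).
    + exists [y], l. split; auto. unfold sumL; simpl. specialize (Hf y). lra.
    + destruct (IH (a - f y)) as [l1 [l2 [E [H1 H2]]]]; auto; try lra.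
      exists (y :: l1), l2. rewrite E; split; auto. rewrite sumL_cons; lra. Qed.

Lemma bucket (f : list bool -> R) tau a : 0 < a -> (forall y, 0 <= f y <= tau) ->
  forall M l, NoDup l -> INR M * (a + tau) <= sumL l f ->
  exists dec : list bool -> nat, forall m, (m < M)%nat ->
    a <= sumL l (fun y => if Nat.eqb (dec y) m then f y else 0).
Proof. intros Ha Hf. induction M; intros l Hd Hs.
  - exists (fun _ => O). intros; lia.
  - assert (Hf0 : forall y, 0 <= f y) by (intros y; apply Hf).
    assert (Htau : 0 <= tau) by (destruct (Hf []); lra).
    assert (0 <= INR M) by apply pos_INR.
    rewrite S_INR in Hs.
    destruct (prefix_split f tau l a Ha Hf) as [l1 [l2 [E [H1 H2]]]]; [nra|].
    subst l. rewrite sumL_app in Hs.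
    destruct (IHM l2) as [dec2 Hdec2]; [eapply NoDup_app_remove_l; eauto| lra |].
    exists (fun y => if in_dec (list_eq_dec bool_dec) y l1 then O else S (dec2 y)).
    intros m Hm. rewrite sumL_app.
    assert (Hl2 : forall y, In y l2 -> ~ In y l1) by (intros; eapply NoDup_app_disj; eauto).
    destruct m as [|m].
    + rewrite (sumL_ext_in l1 _ f) by (intros y Hy; destruct (in_dec _ y l1); [reflexivity|contradiction]).
      assert (0 <= sumL l2 (fun y => if Nat.eqb (if in_dec (list_eq_dec bool_dec) y l1 then 0%nat else S (dec2 y)) 0 then f y else 0)).
      { apply sumL_nonneg; intros y _. destruct (Nat.eqb _ _); auto; lra. }
      lra.
    + rewrite (sumL_zero l1) by (intros y Hy; destruct (in_dec _ y l1); [reflexivity|contradiction]).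
      rewrite (sumL_ext_in l2 _ (fun y => if Nat.eqb (dec2 y) m then f y else 0)).
      * rewrite Rplus_0_l. apply Hdec2. lia.
      * intros y Hy. destruct (in_dec _ y l1); [exfalso; eapply Hl2; eauto|]. reflexivity.
Qed.

Lemma avgMK_sumL {A} (c : Code) (l : list A) (f : A -> nat -> nat -> R) :
  sumL l (fun a => avgMK c (f a)) = avgMK c (fun m k => sumL l (fun a => f a m k)).
Proof. unfold avgMK. rewrite sumL_scal. f_equal.
  rewrite sumL_swap. apply sumL_ext; intros m. rewrite sumL_swap. reflexivity. Qed.

Lemma avgMK_le c f g : (forall m k, (m < cM c)%nat -> (k < cK c)%nat -> f m k <= g m k) ->
  (1 <= cM c)%nat -> (1 <= cK c)%nat -> avgMK c f <= avgMK c g.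
Proof. intros H H1 H2. unfold avgMK. apply Rmult_le_compat_l.
  - left; apply Rinv_0_lt_compat, Rmult_lt_0_compat; apply lt_0_INR; lia.
  - apply sumL_le; intros m Hm; apply sumL_le; intros k Hk. apply in_seq in Hm, Hk. apply H; lia. Qed.

Lemma avgMK_const c r : (1 <= cM c)%nat -> (1 <= cK c)%nat -> avgMK c (fun _ _ => r) = r.
Proof. intros H1 H2. unfold avgMK. rewrite (sumL_ext _ _ (fun _ => INR (cK c) * r)).
  2:{ intros; rewrite sumL_const, length_seq; reflexivity. }
  rewrite sumL_const, length_seq. field. split; apply not_0_INR; lia. Qed.

Lemma avgMK_plus c f g : avgMK c (fun m k => f m k + g m k) = avgMK c f + avgMK c g.
Proof. unfold avgMK. rewrite <- Rmult_plus_distr_l. f_equal. rewrite <- sumL_plus.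
  apply sumL_ext; intros; apply sumL_plus. Qed.
Lemma avgMK_minus c f g : avgMK c (fun m k => f m k - g m k) = avgMK c f - avgMK c g.
Proof. unfold avgMK. rewrite <- Rmult_minus_distr_l. f_equal. rewrite <- sumL_minus.
  apply sumL_ext; intros; apply sumL_minus. Qed.

Lemma avgMK_scal c r f : r * avgMK c f = avgMK c (fun m k => r * f m k).
Proof. unfold avgMK. rewrite (sumL_ext _ (fun m => sumL (seq 0 (cK c)) (fun k => r * f m k)) (fun m => r * sumL (seq 0 (cK c)) (fun k => f m k))).
  2:{ intros; rewrite sumL_scal; reflexivity. } rewrite sumL_scal. ring. Qed.

Lemma ln_le_x_minus_1 x : 0 < x -> ln x <= x - 1.
Proof. intros H. pose proof (exp_ineq1_le (ln x)). rewrite exp_ln in H0 by auto. lra. Qed.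

Lemma ln_div x y : 0 < x -> 0 < y -> ln (x / y) = ln x - ln y.
Proof. intros. unfold Rdiv. rewrite ln_mult by (auto; apply Rinv_0_lt_compat; auto). rewrite ln_Rinv by auto. ring. Qed.

Lemma ln_le x y : 0 < x -> x <= y -> ln x <= ln y.
Proof. intros H1 [H2|H2]; [left; apply ln_increasing; auto| subst; lra]. Qed.

Section Gen.
Variable p : R.
Hypothesis Hp : 0 < p < 1.
Variable n : nat.
Variable c : Code.
Hypothesis Hk : enc_kernel n c.
Hypothesis HM : (1 <= cM c)%nat.
Hypothesis HK : (1 <= cK c)%nat.

Lemma inner_one m k : (m < cM c)%nat -> (k < cK c)%nat ->
  sumL (allseq n) (fun s => PSn p s * sumL (allseq n) (fun x => cenc c m k s x)) = 1.
Proof. intros. rewrite (sumL_ext_in _ _ (PSn p)). apply PSn_sum; auto.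
  intros s Hs. destruct Hk as [_ H2]. rewrite H2; auto; ring. Qed.

Lemma PZhat_expect (w : list bool -> R) :
  sumL (allseq n) (fun z => w z * PZhat n p c z) =
  avgMK c (fun m k => sumL (allseq n) (fun s => PSn p s *
     sumL (allseq n) (fun x => cenc c m k s x * w (xorseq x s)))).
Proof. unfold PZhat. rewrite (sumL_ext _ _ (fun z => avgMK c (fun m k => w z * sumL (allseq n) (fun s => PSn p s *
     sumL (allseq n) (fun x => cenc c m k s x *
        (if listb_eqb (xorseq x s) z then 1 else 0)))))).
  2:{ intros z. apply avgMK_scal. }
  rewrite avgMK_sumL. unfold avgMK. f_equal. apply sumL_ext; intros m; apply sumL_ext; intros k.
  rewrite (sumL_ext _ _ (fun z => sumL (allseq n) (fun s => w z * (PSn p s * sumL (allseq n) (fun x => cenc c m k s x * (if listb_eqb (xorseq x s) z then 1 else 0)))))).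
  2:{ intros; rewrite sumL_scal; reflexivity. }
  rewrite sumL_swap. apply sumL_ext_in; intros s Hs.
  rewrite (sumL_ext _ _ (fun z => PSn p s * (w z * sumL (allseq n) (fun x => cenc c m k s x * (if listb_eqb (xorseq x s) z then 1 else 0))))).
  2:{ intros; ring. }
  rewrite sumL_scal. f_equal.
  rewrite (sumL_ext _ _ (fun z => sumL (allseq n) (fun x => w z * (cenc c m k s x * (if listb_eqb (xorseq x s) z then 1 else 0))))).
  2:{ intros; rewrite sumL_scal; reflexivity. }
  rewrite sumL_swap. apply sumL_ext_in; intros x Hx.
  rewrite (sumL_ext _ _ (fun z => if listb_eqb z (xorseq x s) then cenc c m k s x * w z else 0)).
  - rewrite sum_indicator; [|apply NoDup_allseq| apply xorseq_allseq; auto]. reflexivity.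
  - intros z. destruct (listb_eqb (xorseq x s) z) eqn:E.
    + apply listb_eqb_true in E; subst. rewrite listb_eqb_refl; ring.
    + destruct (listb_eqb z (xorseq x s)) eqn:E2; [|ring]. apply listb_eqb_true in E2; subst.
      rewrite listb_eqb_refl in E; discriminate.
Qed.

Lemma PZhat_sum : sumL (allseq n) (PZhat n p c) = 1.
Proof. rewrite (sumL_ext _ _ (fun z => 1 * PZhat n p c z)) by (intros; ring).
  rewrite PZhat_expect. transitivity (avgMK c (fun _ _ => 1)); [|apply avgMK_const; auto].
  unfold avgMK. f_equal. apply sumL_ext_in; intros m Hm; apply sumL_ext_in; intros k Hk'.
  apply in_seq in Hm, Hk'.
  transitivity (sumL (allseq n) (fun s => PSn p s * sumL (allseq n) (fun x => cenc c m k s x))); [|apply inner_one; lia].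
  apply sumL_ext; intros s; f_equal; apply sumL_ext; intros; ring. Qed.

Lemma PZhat_nonneg z : 0 <= PZhat n p c z.
Proof. unfold PZhat, avgMK. apply Rmult_le_pos.
  - left; apply Rinv_0_lt_compat, Rmult_lt_0_compat; apply lt_0_INR; lia.
  - apply sumL_nonneg; intros; apply sumL_nonneg; intros; apply sumL_nonneg; intros s _.
    apply Rmult_le_pos; [left; apply PSn_pos; auto|]. apply sumL_nonneg; intros.
    apply Rmult_le_pos; [apply Hk|]. destruct (listb_eqb _ _); lra. Qed.

Lemma ln2_pos : 0 < ln 2.
Proof. rewrite <- ln_1. apply ln_increasing; lra. Qed.

Lemma KL_lower (mu : list bool -> R) : (forall z, 0 < mu z) ->
  KLn n p c * ln 2 >= sumL (allseq n) (fun z => PZhat n p c z * (1 + ln (mu z)))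
                      - sumL (allseq n) (fun z => mu z * PSn p z).
Proof. intros Hmu. unfold KLn. rewrite <- sumL_scalr, <- sumL_minus. apply Rle_ge, sumL_le.
  intros z _. unfold Q0n. pose proof (PSn_pos p Hp z). pose proof (Hmu z).
  destruct (Rlt_le_dec 0 (PZhat n p c z)) as [Hz|Hz].
  - unfold log2. field_simplify; [|apply Rgt_not_eq, ln2_pos].
    set (P := PZhat n p c z) in *. set (Q := PSn p z) in *. set (u := mu z) in *.
    assert (Hr : 0 < u * Q / P) by (apply Rdiv_lt_0_compat; nra).
    pose proof (ln_le_x_minus_1 _ Hr) as Hl.
    rewrite ln_div, ln_mult in Hl by nra. rewrite ln_div by nra.
    assert (E : P * (u * Q / P - 1) = u * Q - P) by (field; lra).
    nra.
  - assert (E : PZhat n p c z = 0) by (pose proof (PZhat_nonneg z); lra). rewrite E. nra.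
Qed.

Lemma KL_nonneg : 0 <= KLn n p c.
Proof. pose proof (KL_lower (fun _ => 1) (fun _ => Rlt_0_1)) as H. cbv beta in H. rewrite ln_1 in H.
  rewrite (sumL_ext _ (fun z => _ * (1 + 0)) (PZhat n p c)) in H by (intros; ring).
  rewrite (sumL_ext _ (fun z => 1 * _) (PSn p)) in H by (intros; ring).
  rewrite PZhat_sum, PSn_sum in H by auto. pose proof ln2_pos. nra. Qed.

Lemma KL_upper L : 1 <= L -> (forall z, In z (allseq n) -> PZhat n p c z <= L * PSn p z) ->
  KLn n p c <= log2 L.
Proof. intros HL H. unfold KLn.
  apply Rle_trans with (sumL (allseq n) (fun z => PZhat n p c z * log2 L)).
  - apply sumL_le; intros z Hz. unfold Q0n. pose proof (PSn_pos p Hp z).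
    assert (0 <= log2 L) by (unfold log2; apply Rmult_le_pos; [rewrite <- ln_1; apply ln_le; lra| left; apply Rinv_0_lt_compat, ln2_pos]).
    destruct (Rlt_le_dec 0 (PZhat n p c z)).
    + apply Rmult_le_compat_l; [lra|]. unfold log2. apply Rmult_le_compat_r; [left; apply Rinv_0_lt_compat, ln2_pos|].
      apply ln_le. apply Rdiv_lt_0_compat; lra. specialize (H z Hz).
      apply Rmult_le_reg_r with (PSn p z); auto. unfold Rdiv; rewrite Rmult_assoc, Rinv_l; lra.
    + apply Rmult_le_pos; auto. apply PZhat_nonneg.
  - rewrite sumL_scalr, PZhat_sum. lra.
Qed.

End Gen.

Lemma seq_ind_zero d c len : forall s, (d < s)%nat -> sumL (seq s len) (fun m => if Nat.eqb d m then c else 0) = 0.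
Proof. induction len; intros s H; cbn [seq]; [reflexivity|]. rewrite sumL_cons.
  rewrite IHlen by lia. destruct (Nat.eqb_spec d s); [lia|]. ring. Qed.

Lemma seq_ind_le d c len : 0 <= c -> forall s, sumL (seq s len) (fun m => if Nat.eqb d m then c else 0) <= c.
Proof. intros Hc. induction len; intros s; cbn [seq]; [unfold sumL; simpl; lra|]. rewrite sumL_cons.
  destruct (Nat.eqb_spec d s).
  - rewrite seq_ind_zero by lia. lra.
  - rewrite Rplus_0_l; apply IHlen. Qed.

Section Ach.
Variable p : R.
Hypothesis Hp : 0 < p < 1.
Variable n : nat.
Variable dec : list bool -> nat.

Definition Pd (m : nat) : R := sumL (allseq n) (fun y => if Nat.eqb (dec y) m then PSn p y else 0).
Definition Qm (m : nat) (y : list bool) : R :=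
  if Rlt_dec 0 (Pd m) then (if Nat.eqb (dec y) m then PSn p y / Pd m else 0) else PSn p y.

Variable M : nat.
Definition mkc : Code := mkCode M 1 (fun m k s x => Qm m (xorseq x s)) (fun y k => dec y).

Lemma Qm_nonneg m y : 0 <= Qm m y.
Proof. unfold Qm. pose proof (PSn_pos p Hp y). destruct (Rlt_dec 0 (Pd m)); [|lra].
  destruct (Nat.eqb _ _); [|lra]. left; apply Rdiv_lt_0_compat; auto. Qed.

Lemma Qm_sum m : sumL (allseq n) (Qm m) = 1.
Proof. unfold Qm. destruct (Rlt_dec 0 (Pd m)).
  - rewrite (sumL_ext _ _ (fun y => (/ Pd m) * (if Nat.eqb (dec y) m then PSn p y else 0))).
    + rewrite sumL_scal. fold (Pd m). field. lra.
    + intros y. destruct (Nat.eqb _ _); unfold Rdiv; ring.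
  - apply PSn_sum; auto. Qed.

Lemma mkc_kernel : enc_kernel n mkc.
Proof. split.
  - intros; simpl; apply Qm_nonneg.
  - intros m k s Hm Hk Hs. simpl. apply In_allseq in Hs.
    rewrite (xor_change n s (Qm m)) by auto. apply Qm_sum. Qed.

Lemma mkc_causal : causal n mkc.
Proof. intros m k s s' i xp Hs Hs' Hf. simpl.
  assert (G : forall s0, In s0 (allseq n) -> firstn i s0 = firstn i s ->
    sumL (allseq n) (fun x => if listb_eqb (firstn i x) xp then Qm m (xorseq x s0) else 0) =
    sumL (allseq n) (fun y => if listb_eqb (xorseq (firstn i y) (firstn i s)) xp then Qm m y else 0)).
  { intros s0 H0 Hf0. apply In_allseq in H0 as H0'.
    rewrite (sumL_ext_in _ _ (fun x => (fun y => if listb_eqb (xorseq (firstn i y) (firstn i s)) xp then Qm m y else 0) (xorseq x s0))).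
    - apply (xor_change n s0 (fun y => if listb_eqb (xorseq (firstn i y) (firstn i s)) xp then Qm m y else 0)); auto.
    - intros x Hx. apply In_allseq in Hx. cbv beta. rewrite <- Hf0, <- xorseq_firstn.
      rewrite xorseq_invol by congruence. reflexivity. }
  rewrite (G s), (G s'); auto. Qed.

Lemma mkc_Perr : (forall m, (m < M)%nat -> 0 < Pd m) -> Perr n p mkc = 0.
Proof. intros H. unfold Perr, avgMK. simpl cM. rewrite (sumL_zero (seq 0 M)); [ring|].
  intros m Hm. apply in_seq in Hm. apply sumL_zero; intros k _. apply sumL_zero; intros s _.
  rewrite (sumL_zero (allseq n)); [ring|]. intros x _. simpl.
  unfold Qm. destruct (Rlt_dec 0 (Pd m)); [|exfalso; apply n0, H; lia].
  destruct (Nat.eqb (dec (xorseq x s)) m); ring. Qed.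

Lemma mkc_PZhat z : In z (allseq n) -> PZhat n p mkc z = avgMK mkc (fun m k => Qm m z).
Proof. intros Hz. unfold PZhat. unfold avgMK. f_equal. apply sumL_ext; intros m; apply sumL_ext; intros k.
  simpl cenc. rewrite (sumL_ext_in _ _ (fun s => PSn p s * Qm m z)).
  - rewrite sumL_scalr, PSn_sum; auto; ring.
  - intros s Hs. f_equal. apply In_allseq in Hs.
    rewrite (xor_change n s (fun y => Qm m y * (if listb_eqb y z then 1 else 0))) by auto.
    rewrite (sumL_ext _ _ (fun y => if listb_eqb y z then Qm m y else 0)).
    + apply sum_indicator; auto. apply NoDup_allseq.
    + intros y; destruct (listb_eqb y z); ring. Qed.

Lemma mkc_PZhat_bound a : 0 < a -> (1 <= M)%nat -> (forall m, (m < M)%nat -> a <= Pd m) ->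
  forall z, In z (allseq n) -> PZhat n p mkc z <= / (INR M * a) * PSn p z.
Proof. intros Ha HM H z Hz. rewrite mkc_PZhat by auto. unfold avgMK. simpl cM; simpl cK.
  simpl seq. replace (INR 1) with 1 by reflexivity.
  assert (0 < INR M) by (apply lt_0_INR; lia).
  rewrite (sumL_ext _ _ (fun m => Qm m z)) by (intros; unfold sumL; simpl; ring).
  pose proof (PSn_pos p Hp z).
  apply Rle_trans with (/ INR M * (PSn p z / a)).
  - rewrite Rmult_1_r. apply Rmult_le_compat_l; [left; apply Rinv_0_lt_compat; auto|].
    apply Rle_trans with (sumL (seq 0 M) (fun m => if Nat.eqb (dec z) m then PSn p z / a else 0)).
    + apply sumL_le; intros m Hm. apply in_seq in Hm. unfold Qm.
      specialize (H m ltac:(lia)). destruct (Rlt_dec 0 (Pd m)); [|lra].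
      destruct (Nat.eqb (dec z) m); [|lra].
      unfold Rdiv. apply Rmult_le_compat_l; [lra|]. apply Rinv_le_contravar; lra.
    + apply seq_ind_le. left; apply Rdiv_lt_0_compat; auto.
  - right. field. lra. Qed.

End Ach.

Lemma nat_ceil x : 0 <= x -> exists M : nat, x <= INR M <= x + 1.
Proof. intros Hx. destruct (archimed x) as [H1 H2].
  assert (0 < up x)%Z by (apply lt_0_IZR; lra).
  exists (Z.to_nat (up x)). rewrite INR_IZR_INZ, Z2Nat.id by lia. lra. Qed.

Lemma Rpower2_ge1 x : 0 <= x -> 1 <= Rpower 2 x.
Proof. intros. unfold Rpower. pose proof (exp_ineq1_le (x * ln 2)). pose proof ln2_pos. nra. Qed.

Lemma exp_neg_le u : 0 < u -> exp (- u) <= / u.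
Proof. intros Hu. pose proof (exp_ineq1_le u). rewrite exp_Ropp. apply Rinv_le_contravar; lra. Qed.

Section Cheb.
Variable p : R.
Hypothesis Hp : 0 < p < 1.

Lemma cheb n eta (B : list bool -> bool) : 0 < INR n -> 0 < eta ->
  (forall t, In t (allseq n) -> B t = true -> INR n * eta < Rabs (INR (wt t) - INR n * p)) ->
  sumL (allseq n) (fun t => if B t then PSn p t else 0) <= p * (1 - p) / (INR n * eta ^ 2).
Proof. intros Hn He HB.
  apply Rle_trans with (sumL (allseq n) (fun t => / (INR n * eta)^2 * (PSn p t * (INR (wt t) - INR n * p)^2))).
  - apply sumL_le; intros t Ht. pose proof (PSn_pos p Hp t).
    assert (0 < (INR n * eta)^2) by (apply pow_lt; nra).
    destruct (B t) eqn:E.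
    + specialize (HB t Ht E).
      assert ((INR n * eta)^2 <= (INR (wt t) - INR n * p)^2).
      { rewrite <- (pow2_abs (INR (wt t) - INR n * p)). assert (0 <= INR n * eta) by (apply Rmult_le_pos; lra). apply pow_incr; lra. }
      apply Rmult_le_reg_l with ((INR n * eta)^2); auto.
      rewrite <- Rmult_assoc, Rinv_r, Rmult_1_l by lra. nra.
    + apply Rmult_le_pos; [left; apply Rinv_0_lt_compat; auto|]. apply Rmult_le_pos; [lra|]. apply pow2_ge_0.
  - rewrite sumL_scal, PSn_var by auto. right. field. split; lra. Qed.

Lemma ln_PSn_H n t : In t (allseq n) ->
  ln (PSn p t) = - INR n * Hb p * ln 2 - (INR (wt t) - INR n * p) * (ln (1 - p) - ln p).
Proof. intros Ht. apply In_allseq in Ht. rewrite ln_PSn, Ht by auto. unfold Hb, log2.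
  unfold Rdiv. rewrite !Rmult_1_l, !ln_Rinv by lra. field. apply Rgt_not_eq, ln2_pos. Qed.

Lemma Hb_pos : p < 1/2 -> 0 < Hb p.
Proof. intros. unfold Hb, log2. unfold Rdiv. rewrite !Rmult_1_l, !ln_Rinv by lra.
  assert (ln p < 0) by (rewrite <- ln_1; apply ln_increasing; lra).
  assert (ln (1 - p) < 0) by (rewrite <- ln_1; apply ln_increasing; lra).
  pose proof ln2_pos. assert (0 < / ln 2) by (apply Rinv_0_lt_compat; auto).
  assert (0 < p * (- ln p * / ln 2)) by (apply Rmult_lt_0_compat; [lra|]; apply Rmult_lt_0_compat; lra).
  assert (0 < (1 - p) * (- ln (1 - p) * / ln 2)) by (apply Rmult_lt_0_compat; [lra|]; apply Rmult_lt_0_compat; lra).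
  lra. Qed.

Lemma cc_pos : p < 1/2 -> 0 < ln (1 - p) - ln p.
Proof. intros. assert (ln p < ln (1 - p)) by (apply ln_increasing; lra). lra. Qed.

End Cheb.

Lemma mkc_sizes p n dec M R0 RK : 0 <= RK -> Rpower 2 (INR n * R0) <= INR M -> (1 <= M)%nat ->
  code_sizes n R0 RK (mkc p n dec M).
Proof. intros HRK H1 H2. unfold code_sizes; simpl. split; [lia|]. split.
  - apply Rpower2_ge1. apply Rmult_le_pos; [apply pos_INR|lra].
  - split; auto. Qed.

Lemma log2_le x y : 0 < x -> x <= y -> log2 x <= log2 y.
Proof. intros. unfold log2. apply Rmult_le_compat_r; [left; apply Rinv_0_lt_compat, ln2_pos|]. apply ln_le; auto. Qed.

Section AchN.
Variables p RK R0 : R.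
Hypothesis Hp : 0 < p < 1/2.
Hypothesis HRK : 0 <= RK.
Hypothesis HR0 : 0 <= R0 < Hb p.

Definition Rmid := (R0 + Hb p) / 2.
Definition cc := ln (1 - p) - ln p.
Definition dd := (Hb p - Rmid) * ln 2 / cc.
Definition tau (n : nat) := exp (- (INR n * Rmid * ln 2)).
Definition ee (n : nat) := p * (1 - p) / (INR n * dd ^ 2) + (Rpower 2 (INR n * R0) + 1) * tau n.

Lemma Hp1 : 0 < p < 1. Proof. lra. Qed.
Lemma dd_pos : 0 < dd.
Proof. unfold dd, Rmid. pose proof (cc_pos p ltac:(lra) ltac:(lra)). pose proof ln2_pos. fold cc in H.
  apply Rdiv_lt_0_compat; auto. apply Rmult_lt_0_compat; lra. Qed.

Lemma ach_code n : exists c, enc_kernel n c /\ code_sizes n R0 RK c /\ causal n c /\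
  ((1 <= n)%nat -> ee n < 1 -> Perr n p c = 0 /\ KLn n p c <= log2 (/ (1 - ee n))).
Proof.
  pose proof Hp1 as Hp'.
  assert (HP2 : 0 <= Rpower 2 (INR n * R0)) by (left; apply exp_pos).
  destruct (nat_ceil _ HP2) as [M [HM1 HM2]].
  assert (HM : (1 <= M)%nat).
  { pose proof (Rpower2_ge1 (INR n * R0) ltac:(apply Rmult_le_pos; [apply pos_INR|lra])).
    destruct M; [simpl in HM1; lra| lia]. }
  assert (Hgen : forall dec, enc_kernel n (mkc p n dec M) /\ code_sizes n R0 RK (mkc p n dec M) /\ causal n (mkc p n dec M)).
  { intros dec. split; [apply mkc_kernel; auto|]. split; [apply mkc_sizes; auto| apply mkc_causal; auto]. }
  destruct (le_dec 1 n) as [Hn|Hn]; [destruct (Rlt_dec (ee n) 1) as [He|He]|].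
  2,3: exists (mkc p n (fun _ => O) M); destruct (Hgen (fun _ => O)) as [A [B C]];
       split; [exact A|]; split; [exact B|]; split; [exact C|]; intros; exfalso; tauto.
  set (t := tau n).
  assert (Ht : 0 < t) by apply exp_pos.
  set (f := fun y => if Rle_dec (PSn p y) t then PSn p y else 0).
  set (g := sumL (allseq n) (fun y => if (if Rle_dec (PSn p y) t then false else true) then PSn p y else 0)).
  assert (Hn' : 0 < INR n) by (apply lt_0_INR; lia).
  pose proof dd_pos as Hd.
  assert (Hg : g <= p * (1 - p) / (INR n * dd ^ 2)).
  { apply cheb; auto. intros y Hy HB. destruct (Rle_dec (PSn p y) t) as [_|Hl]; [discriminate|].
    apply Rnot_le_lt in Hl. pose proof (PSn_pos p Hp' y).
    assert (Hln : ln t < ln (PSn p y)) by (apply ln_increasing; auto).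
    unfold t, tau in Hln. rewrite ln_exp in Hln. rewrite (ln_PSn_H p Hp' n y Hy) in Hln.
    assert (Hc : 0 < cc) by (apply cc_pos; lra). fold cc in Hln.
    assert (E : dd * cc = (Hb p - Rmid) * ln 2) by (unfold dd; field; lra).
    assert (INR (wt y) - INR n * p < - (INR n * dd)).
    { apply Rmult_lt_reg_r with cc; auto. replace (- (INR n * dd) * cc) with (- (INR n * ((Hb p - Rmid) * ln 2))) by (rewrite <- E; ring). lra. }
    assert (0 < INR n * dd) by (apply Rmult_lt_0_compat; auto). rewrite Rabs_left; lra. }
  assert (Hg0 : 0 <= g) by (apply sumL_nonneg; intros; destruct (Rle_dec _ _); [lra| left; apply PSn_pos; auto]).
  assert (Hfg : sumL (allseq n) f = 1 - g).
  { unfold g, f. rewrite <- (PSn_sum p n), <- sumL_minus. apply sumL_ext; intros y.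
    destruct (Rle_dec _ _); ring. }
  assert (HMr : 0 < INR M) by (apply lt_0_INR; lia).
  assert (HMt : INR M * t <= (Rpower 2 (INR n * R0) + 1) * tau n) by (apply Rmult_le_compat_r; [left; apply exp_pos|]; lra).
  set (a := (1 - g) / INR M - t).
  assert (HMa : INR M * a = 1 - g - INR M * t) by (unfold a; field; lra).
  assert (HMa1 : 1 - ee n <= INR M * a) by (unfold ee in *; lra).
  assert (Ha : 0 < a) by nra.
  destruct (bucket f t a Ha) with (M := M) (l := allseq n) as [dec Hdec].
  { intros y; unfold f; pose proof (PSn_pos p Hp' y); destruct (Rle_dec _ _); lra. }
  { apply NoDup_allseq. }
  { rewrite Hfg. right. unfold a. field. lra. }
  assert (HPd : forall m, (m < M)%nat -> a <= Pd p n dec m).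
  { intros m Hm. apply Rle_trans with (sumL (allseq n) (fun y => if Nat.eqb (dec y) m then f y else 0)); [apply Hdec; auto|]. apply sumL_le; intros y _.
    unfold f. destruct (Nat.eqb _ _); [|lra]. pose proof (PSn_pos p Hp' y). destruct (Rle_dec _ _); lra. }
  exists (mkc p n dec M). destruct (Hgen dec) as [A [B C]]. split; [exact A|]. split; [exact B|]. split; [exact C|]. intros _ _. split.
  - apply mkc_Perr; auto. intros m Hm. specialize (HPd m Hm). lra.
  - assert (HL : 1 <= / (INR M * a)).
    { rewrite <- Rinv_1. apply Rinv_le_contravar; [lra|]. nra. }
    assert (Hb : forall z, In z (allseq n) -> PZhat n p (mkc p n dec M) z <= / (INR M * a) * PSn p z).
    { intros z Hz. apply mkc_PZhat_bound; auto. }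
    eapply Rle_trans.
    + apply (KL_upper p Hp' n (mkc p n dec M) A); [simpl; lia | simpl; lia | exact HL | exact Hb].
    + apply log2_le. apply Rinv_0_lt_compat; lra. apply Rinv_le_contravar; lra.
Qed.

End AchN.

Section Lim.
Variables p RK R0 : R.
Hypothesis Hp : 0 < p < 1/2.
Hypothesis HRK : 0 <= RK.
Hypothesis HR0 : 0 <= R0 < Hb p.

Definition Kc := p * (1 - p) / dd p R0 ^ 2 + / ((Rmid p R0 - R0) * ln 2) + / (Rmid p R0 * ln 2).

Lemma ee_bound n : (1 <= n)%nat -> ee p R0 n <= Kc / INR n.
Proof. intros Hn. assert (Hn' : 0 < INR n) by (apply lt_0_INR; lia).
  pose proof (dd_pos p R0 Hp HR0) as Hd. pose proof ln2_pos.
  assert (HR1 : R0 < Rmid p R0) by (unfold Rmid; lra).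
  unfold ee, Kc, tau, Rpower.
  rewrite Rmult_plus_distr_r, Rmult_1_l, <- exp_plus.
  replace (INR n * R0 * ln 2 + - (INR n * Rmid p R0 * ln 2)) with (- (INR n * ((Rmid p R0 - R0) * ln 2))) by ring.
  assert (E1 : exp (- (INR n * ((Rmid p R0 - R0) * ln 2))) <= / (INR n * ((Rmid p R0 - R0) * ln 2))).
  { apply exp_neg_le. apply Rmult_lt_0_compat; auto; apply Rmult_lt_0_compat; lra. }
  assert (E2 : exp (- (INR n * Rmid p R0 * ln 2)) <= / (INR n * (Rmid p R0 * ln 2))).
  { rewrite Rmult_assoc. apply exp_neg_le. apply Rmult_lt_0_compat; auto; apply Rmult_lt_0_compat; lra. }
  assert (E : Kc / INR n = p * (1 - p) / (INR n * dd p R0 ^ 2) + / (INR n * ((Rmid p R0 - R0) * ln 2)) + / (INR n * (Rmid p R0 * ln 2))).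
  { unfold Kc. field. repeat split; try lra; apply Rgt_not_eq; try apply Rmult_lt_0_compat; try lra; apply pow_lt; lra. }
  unfold Kc in E. rewrite E. lra. Qed.

Lemma Kc_pos : 0 < Kc.
Proof. pose proof (dd_pos p R0 Hp HR0) as Hd. pose proof ln2_pos.
  assert (HR1 : R0 < Rmid p R0) by (unfold Rmid; lra).
  unfold Kc. assert (0 < p * (1 - p) / dd p R0 ^ 2) by (apply Rdiv_lt_0_compat; [nra| apply pow_lt; lra]).
  assert (0 < / ((Rmid p R0 - R0) * ln 2)) by (apply Rinv_0_lt_compat; apply Rmult_lt_0_compat; lra).
  assert (0 < / (Rmid p R0 * ln 2)) by (apply Rinv_0_lt_compat; apply Rmult_lt_0_compat; lra).
  lra. Qed.

Lemma log2_inv_bound e : 0 <= e <= 1/2 -> log2 (/ (1 - e)) <= 2 * e / ln 2.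
Proof. intros He. unfold log2. pose proof ln2_pos. unfold Rdiv. apply Rmult_le_compat_r; [left; apply Rinv_0_lt_compat; auto|].
  eapply Rle_trans; [apply ln_le_x_minus_1; apply Rinv_0_lt_compat; lra|].
  replace (/ (1 - e) - 1) with (e / (1 - e)) by (field; lra).
  apply Rmult_le_reg_r with (1 - e); [lra|]. unfold Rdiv. rewrite Rmult_assoc, Rinv_l by lra. nra. Qed.

Lemma achievable_R0 : achievable true p RK R0.
Proof.
  split; [lra|].
  set (codes := fun n => proj1_sig (constructive_indefinite_description _ (ach_code p RK R0 Hp HRK HR0 n))).
  assert (Hc : forall n, let c := codes n in enc_kernel n c /\ code_sizes n R0 RK c /\ causal n c /\
    ((1 <= n)%nat -> ee p R0 n < 1 -> Perr n p c = 0 /\ KLn n p c <= log2 (/ (1 - ee p R0 n)))).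
  { intros n. unfold codes. destruct (constructive_indefinite_description _ _) as [c Hc]. exact Hc. }
  exists codes.
  assert (Hev : forall eps, 0 < eps -> exists N, forall n, (n >= N)%nat -> (1 <= n)%nat /\ 0 <= ee p R0 n /\ ee p R0 n <= 1/2 /\ 2 * ee p R0 n / ln 2 < eps).
  { intros eps He. pose proof Kc_pos. pose proof ln2_pos.
    assert (HX : 0 <= 2 * Kc + 2 * Kc / (ln 2 * eps) + 1).
    { assert (0 < 2 * Kc / (ln 2 * eps)) by (apply Rdiv_lt_0_compat; nra). lra. }
    destruct (nat_ceil _ HX) as [N [HN1 HN2]].
    exists N. intros n Hn. assert (HnN : INR N <= INR n) by (apply le_INR; lia).
    assert (Hn1 : (1 <= n)%nat) by (destruct n; [simpl in HnN; assert (0 < 2 * Kc / (ln 2 * eps)) by (apply Rdiv_lt_0_compat; nra); lra | lia]).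
    assert (Hn' : 0 < INR n) by (apply lt_0_INR; lia).
    pose proof (ee_bound n Hn1) as Hb.
    assert (He0 : 0 <= ee p R0 n).
    { unfold ee. pose proof (dd_pos p R0 Hp HR0). assert (0 < tau p R0 n) by apply exp_pos.
      assert (0 < Rpower 2 (INR n * R0)) by apply exp_pos.
      assert (0 <= p * (1 - p) / (INR n * dd p R0 ^ 2)) by (left; apply Rdiv_lt_0_compat; [nra| apply Rmult_lt_0_compat; [lra| apply pow_lt; lra]]).
      nra. }
    assert (HK1 : Kc / INR n <= 1/2).
    { apply Rmult_le_reg_r with (INR n); auto. unfold Rdiv. rewrite Rmult_assoc, Rinv_l by lra.
      assert (0 < 2 * Kc / (ln 2 * eps)) by (apply Rdiv_lt_0_compat; nra). lra. }
    assert (HK2 : 2 * (Kc / INR n) / ln 2 < eps).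
    { assert (2 * Kc / (ln 2 * eps) < INR n) by lra.
      assert (E : 2 * (Kc / INR n) / ln 2 = (2 * Kc / (ln 2 * eps)) * (eps / INR n)) by (field; lra).
      rewrite E. apply Rlt_le_trans with (INR n * (eps / INR n)).
      - apply Rmult_lt_compat_r; [apply Rdiv_lt_0_compat; lra| lra].
      - right; field; lra. }
    split; auto. split; auto. split; [lra|].
    apply Rle_lt_trans with (2 * (Kc / INR n) / ln 2); auto.
    unfold Rdiv. apply Rmult_le_compat_r; [left; apply Rinv_0_lt_compat; lra|]. lra. }
  split; [intros n; destruct (Hc n) as [A [B [C _]]]; auto|].
  split.
  - intros eps He. destruct (Hev eps He) as [N HN]. exists N. intros n Hn.
    destruct (HN n Hn) as [Hn1 [_ [He1 _]]]. destruct (Hc n) as [_ [_ [_ HD]]].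
    destruct (HD Hn1 ltac:(lra)) as [HP _]. unfold R_dist. rewrite HP, Rminus_0_r, Rabs_R0. lra.
  - intros eps He. destruct (Hev eps He) as [N HN]. exists N. intros n Hn.
    destruct (HN n Hn) as [Hn1 [He0 [He1 He2]]]. destruct (Hc n) as [HK [HS [_ HD]]].
    destruct (HD Hn1 ltac:(lra)) as [_ HKL].
    assert (HM : (1 <= cM (codes n))%nat) by (destruct HS as [_ [_ [H _]]]; auto).
    assert (HKK : (1 <= cK (codes n))%nat) by (destruct HS as [H _]; auto).
    pose proof (KL_nonneg p ltac:(lra) n (codes n) HK HM HKK).
    pose proof (log2_inv_bound (ee p R0 n) ltac:(lra)).
    unfold R_dist. rewrite Rminus_0_r, Rabs_pos_eq by lra. lra.
Qed.

End Lim.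

Lemma avgMK_ext_in c f g : (forall m k, (m < cM c)%nat -> (k < cK c)%nat -> f m k = g m k) ->
  avgMK c f = avgMK c g.
Proof. intros H. unfold avgMK. f_equal. apply sumL_ext_in; intros m Hm; apply sumL_ext_in; intros k Hk.
  apply in_seq in Hm, Hk. apply H; lia. Qed.

Section Conv.
Variable p : R.
Hypothesis Hp : 0 < p < 1.
Variable n : nat.
Variable c : Code.
Hypothesis Hk : enc_kernel n c.
Hypothesis HM : (1 <= cM c)%nat.
Hypothesis HK : (1 <= cK c)%nat.
Variable E : R.
Hypothesis HE : 0 < E.
Definition indA (y : list bool) : R := if Rle_dec (/ E) (PSn p y) then 1 else 0.

Definition Corr m k := sumL (allseq n) (fun s => PSn p s * sumL (allseq n) (fun x => cenc c m k s x *
        (if Nat.eqb (cdec c (xorseq x s) k) m then 1 else 0))).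

Lemma Perr_Corr : Perr n p c = 1 - avgMK c Corr.
Proof. transitivity (avgMK c (fun _ _ => 1) - avgMK c Corr); [|rewrite avgMK_const; auto].
  unfold Perr. rewrite <- avgMK_minus.
  apply avgMK_ext_in; intros m k Hm Hk'.
  transitivity (sumL (allseq n) (fun s => PSn p s * sumL (allseq n) (fun x => cenc c m k s x)) - Corr m k).
  2:{ rewrite (inner_one p n c Hk m k) by auto. reflexivity. }
  unfold Corr. rewrite <- sumL_minus. apply sumL_ext; intros s. rewrite <- Rmult_minus_distr_l. f_equal.
  rewrite <- sumL_minus. apply sumL_ext; intros x. destruct (Nat.eqb _ _); ring. Qed.

Definition Nmk m k := sumL (allseq n) (fun y => if Nat.eqb (cdec c y k) m then indA y else 0).

Lemma indA_01 y : indA y = 0 \/ indA y = 1.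
Proof. unfold indA; destruct (Rle_dec _ _); auto. Qed.

Lemma Corr_le m k : (m < cM c)%nat -> (k < cK c)%nat ->
  Corr m k <= Nmk m k + sumL (allseq n) (fun s => PSn p s * sumL (allseq n) (fun x => cenc c m k s x * (1 - indA (xorseq x s)))).
Proof. intros Hm Hk'.
  apply Rle_trans with (Nmk m k * sumL (allseq n) (fun s => PSn p s * sumL (allseq n) (fun x => cenc c m k s x)) +
    sumL (allseq n) (fun s => PSn p s * sumL (allseq n) (fun x => cenc c m k s x * (1 - indA (xorseq x s))))).
  2:{ rewrite (inner_one p n c Hk m k) by auto. lra. }
  rewrite <- sumL_scal, <- sumL_plus. unfold Corr. apply sumL_le; intros s Hs.
  rewrite <- Rmult_assoc, (Rmult_comm (Nmk m k)), Rmult_assoc, <- Rmult_plus_distr_l.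
  apply Rmult_le_compat_l; [left; apply PSn_pos; auto|].
  rewrite <- sumL_scal, <- sumL_plus. apply sumL_le; intros x Hx.
  assert (Hxs : In (xorseq x s) (allseq n)) by (apply xorseq_allseq; auto).
  assert (HN : (if Nat.eqb (cdec c (xorseq x s) k) m then indA (xorseq x s) else 0) <= Nmk m k).
  { unfold Nmk. apply (sumL_in_le _ (fun y => if Nat.eqb (cdec c y k) m then indA y else 0)); auto.
    intros y _. destruct (Nat.eqb _ _); [destruct (indA_01 y) as [-> | ->]|]; lra. }
  assert (0 <= cenc c m k s x) by apply Hk.
  destruct (Nat.eqb (cdec c (xorseq x s) k) m); destruct (indA_01 (xorseq x s)) as [E0|E0]; rewrite E0 in *; nra.
Qed.

Lemma avgMK_N : avgMK c Nmk <= sumL (allseq n) indA / INR (cM c).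
Proof. unfold avgMK, Nmk.
  assert (HMr : 0 < INR (cM c)) by (apply lt_0_INR; lia). assert (HKr : 0 < INR (cK c)) by (apply lt_0_INR; lia).
  rewrite sumL_swap. 
  apply Rle_trans with (/ (INR (cM c) * INR (cK c)) * sumL (seq 0 (cK c)) (fun k => sumL (allseq n) indA)).
  - apply Rmult_le_compat_l; [left; apply Rinv_0_lt_compat; nra|]. apply sumL_le; intros k _.
    rewrite sumL_swap. apply sumL_le; intros y _. apply seq_ind_le. destruct (indA_01 y) as [-> | ->]; lra.
  - rewrite sumL_const, length_seq. right. field. lra. Qed.

Lemma main_ineq : 1 - Perr n p c <= sumL (allseq n) indA / INR (cM c) + sumL (allseq n) (fun z => (1 - indA z) * PZhat n p c z).
Proof. rewrite Perr_Corr. rewrite PZhat_expect by auto.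
  assert (avgMK c Corr <= avgMK c (fun m k => Nmk m k + sumL (allseq n) (fun s => PSn p s * sumL (allseq n) (fun x => cenc c m k s x * (1 - indA (xorseq x s))))))
   by (apply avgMK_le; auto; intros; apply Corr_le; auto).
  rewrite avgMK_plus in H. pose proof avgMK_N. lra. Qed.

Lemma cardA : sumL (allseq n) indA <= E.
Proof. apply Rle_trans with (sumL (allseq n) (fun y => E * PSn p y)).
  - apply sumL_le; intros y _. unfold indA. pose proof (PSn_pos p Hp y). destruct (Rle_dec _ _).
    + apply Rmult_le_reg_l with (/ E). apply Rinv_0_lt_compat; auto. rewrite <- Rmult_assoc, Rinv_l; lra.
    + nra.
  - rewrite sumL_scal, PSn_sum; lra. Qed.

Lemma PZc_bound beta : 0 < beta -> sumL (allseq n) (fun y => (1 - indA y) * PSn p y) <= beta ->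
  sumL (allseq n) (fun z => (1 - indA z) * PZhat n p c z) * ln (/ beta) <= KLn n p c * ln 2 + 1.
Proof. intros Hb Hs.
  pose proof (KL_lower p Hp n c Hk HM HK (fun z => 1 + (1 - indA z) / beta)) as HL.
  assert (Hmu : forall z, 0 < 1 + (1 - indA z) / beta).
  { intros z. destruct (indA_01 z) as [-> | ->]; [|lra]. assert (0 < (1-0)/beta) by (apply Rdiv_lt_0_compat; lra). lra. }
  specialize (HL Hmu).
  assert (H1 : sumL (allseq n) (fun z => (1 + (1 - indA z) / beta) * PSn p z) <= 2).
  { rewrite (sumL_ext _ _ (fun z => PSn p z + / beta * ((1 - indA z) * PSn p z))) by (intros; unfold Rdiv; ring).
    rewrite sumL_plus, sumL_scal, PSn_sum. apply Rmult_le_compat_l with (r := / beta) in Hs; [|left; apply Rinv_0_lt_compat; auto].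
    rewrite Rinv_l in Hs; lra. }
  assert (H2 : sumL (allseq n) (fun z => PZhat n p c z) + ln (/ beta) * sumL (allseq n) (fun z => (1 - indA z) * PZhat n p c z)
              <= sumL (allseq n) (fun z => PZhat n p c z * (1 + ln (1 + (1 - indA z) / beta)))).
  { rewrite <- sumL_scal, <- sumL_plus. apply sumL_le; intros z _. pose proof (PZhat_nonneg p Hp n c Hk HM HK z).
    destruct (indA_01 z) as [E0|E0]; rewrite E0.
    - assert (ln (/ beta) <= ln (1 + (1 - 0) / beta)).
      { apply ln_le. apply Rinv_0_lt_compat; auto. unfold Rdiv; lra. }
      nra.
    - replace (1 + (1 - 1) / beta) with 1 by (field; lra). rewrite ln_1. lra. }
  pose proof (PZhat_sum p n c Hk HM HK) as HS. rewrite (sumL_ext _ (fun z => PZhat n p c z) (PZhat n p c)) in H2 by reflexivity. lra. Qed.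

End Conv.

Lemma converse p RK R0 : 0 < p < 1/2 -> achievable false p RK R0 -> R0 <= Hb p.
Proof.
  intros Hp [HR0 [codes [Hc [HPe HKL]]]].
  destruct (Rle_lt_dec R0 (Hb p)) as [|Hlt]; auto. exfalso.
  assert (Hp' : 0 < p < 1) by lra.
  set (H := Hb p) in *. set (d := (R0 - H) / 3).
  assert (Hd : 0 < d) by (unfold d; lra).
  pose proof ln2_pos as Hl2.
  assert (Hcc : 0 < ln (1 - p) - ln p) by (apply cc_pos; lra).
  set (eta := d * ln 2 / (ln (1 - p) - ln p)).
  assert (Heta : 0 < eta) by (unfold eta; apply Rdiv_lt_0_compat; nra).
  destruct (HPe (1/4) ltac:(lra)) as [N1 HN1].
  destruct (HKL (/ ln 2) ltac:(apply Rinv_0_lt_compat; lra)) as [N2 HN2].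
  assert (HX : 0 <= 4 / (2 * d * ln 2) + exp 8 * (p * (1 - p)) / eta ^ 2).
  { assert (0 < 4 / (2 * d * ln 2)) by (apply Rdiv_lt_0_compat; nra).
    assert (0 < exp 8 * (p * (1 - p)) / eta ^ 2) by (apply Rdiv_lt_0_compat; [apply Rmult_lt_0_compat; [apply exp_pos| nra]| apply pow_lt; lra]).
    lra. }
  destruct (nat_ceil _ HX) as [N3 [HN3 _]].
  set (n := S (N1 + N2 + N3)).
  assert (Hn1 : (n >= N1)%nat) by (unfold n; lia).
  assert (Hn2 : (n >= N2)%nat) by (unfold n; lia).
  assert (Hn' : 0 < INR n) by (apply lt_0_INR; unfold n; lia).
  assert (Hn3 : INR N3 < INR n) by (apply lt_INR; unfold n; lia).
  specialize (HN1 n Hn1). specialize (HN2 n Hn2). unfold R_dist in HN1, HN2. rewrite Rminus_0_r in HN1, HN2.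
  destruct (Hc n) as [HK [HS _]]. set (c := codes n) in *.
  destruct HS as [HK1 [_ [HM1 HMR]]].
  pose proof (KL_nonneg p Hp' n c HK HM1 HK1) as HKL0.
  rewrite Rabs_pos_eq in HN2 by auto.
  set (E := exp (INR n * (H + d) * ln 2)).
  assert (HE : 0 < E) by apply exp_pos.
  pose proof (main_ineq p Hp' n c HK HM1 HK1 E) as HMI.
  pose proof (cardA p Hp' n E HE) as HCA.
  set (beta := p * (1 - p) / (INR n * eta ^ 2)).
  assert (Hbeta : 0 < beta) by (unfold beta; apply Rdiv_lt_0_compat; [nra| apply Rmult_lt_0_compat; [lra| apply pow_lt; lra]]).
  assert (Hcheb : sumL (allseq n) (fun y => (1 - indA p E y) * PSn p y) <= beta).
  { rewrite (sumL_ext _ _ (fun y => if (if Rle_dec (/ E) (PSn p y) then false else true) then PSn p y else 0)).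
    2:{ intros y; unfold indA; destruct (Rle_dec _ _); ring. }
    apply cheb; auto. intros y Hy HB. destruct (Rle_dec (/ E) (PSn p y)) as [_|Hlt2]; [discriminate|].
    apply Rnot_le_lt in Hlt2. pose proof (PSn_pos p Hp' y).
    assert (Hln : ln (PSn p y) < ln (/ E)) by (apply ln_increasing; auto).
    unfold E in Hln. rewrite ln_Rinv, ln_exp in Hln by apply exp_pos.
    rewrite (ln_PSn_H p Hp' n y Hy) in Hln. fold H in Hln.
    assert (Ee : eta * (ln (1 - p) - ln p) = d * ln 2) by (unfold eta; field; lra).
    assert (INR n * eta < INR (wt y) - INR n * p).
    { apply Rmult_lt_reg_r with (ln (1 - p) - ln p); auto.
      replace (INR n * eta * (ln (1 - p) - ln p)) with (INR n * (d * ln 2)) by (rewrite <- Ee; ring). nra. }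
    assert (0 < INR n * eta) by (apply Rmult_lt_0_compat; auto). rewrite Rabs_pos_eq; lra. }
  pose proof (PZc_bound p Hp' n c HK HM1 HK1 E beta Hbeta Hcheb) as HPZ.
  set (PZc := sumL (allseq n) (fun z => (1 - indA p E z) * PZhat n p c z)) in *.
  assert (HPZ0 : 0 <= PZc).
  { apply sumL_nonneg; intros z _. pose proof (PZhat_nonneg p Hp' n c HK HM1 HK1 z).
    destruct (indA_01 p E z) as [-> | ->]; lra. }
  assert (Hlb : 8 < ln (/ beta)).
  { rewrite <- (ln_exp 8). apply ln_increasing; [apply exp_pos|].
    unfold beta. rewrite Rinv_div.
    assert (exp 8 * (p * (1 - p)) / eta ^ 2 < INR n).
    { assert (0 < 4 / (2 * d * ln 2)) by (apply Rdiv_lt_0_compat; nra). lra. }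
    assert (0 < eta ^ 2) by (apply pow_lt; lra).
    apply Rmult_lt_reg_r with (p * (1 - p)); [nra|]. unfold Rdiv. rewrite Rmult_assoc, Rinv_l by nra.
    apply Rmult_lt_reg_r with (/ eta ^ 2); [apply Rinv_0_lt_compat; lra|].
    replace (INR n * eta ^ 2 * 1 * / eta ^ 2) with (INR n) by (field; lra).
    unfold Rdiv in H0. lra. }
  assert (HPZs : PZc <= 2 / 8).
  { assert (KLn n p c * ln 2 < 1).
    { apply Rmult_lt_reg_r with (/ ln 2); [apply Rinv_0_lt_compat; lra|]. rewrite Rmult_assoc, Rinv_r by lra. lra. }
    apply Rmult_le_reg_r with (ln (/ beta)); [lra|]. unfold Rdiv. rewrite Rmult_assoc.
    apply Rle_trans with (KLn n p c * ln 2 + 1); auto.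
    assert (2 * (/ 8 * ln (/ beta)) >= 2) by lra. lra. }
  assert (HEM : sumL (allseq n) (indA p E) / INR (cM c) <= / (2 * INR n * d * ln 2)).
  { assert (HP2 : 0 < Rpower 2 (INR n * R0)) by apply exp_pos.
    apply Rle_trans with (E / Rpower 2 (INR n * R0)).
    - unfold Rdiv. apply Rmult_le_compat; auto.
      + apply sumL_nonneg; intros y _; destruct (indA_01 p E y) as [-> | ->]; lra.
      + left; apply Rinv_0_lt_compat, lt_0_INR; lia.
      + apply Rinv_le_contravar; auto.
    - unfold E, Rpower, Rdiv. rewrite <- exp_Ropp, <- exp_plus.
      replace (INR n * (H + d) * ln 2 + - (INR n * R0 * ln 2)) with (- (2 * INR n * d * ln 2)) by (unfold d; field).
      apply exp_neg_le. apply Rmult_lt_0_compat; [|lra]. nra. }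
  assert (HEM2 : / (2 * INR n * d * ln 2) < 1 / 4).
  { assert (4 / (2 * d * ln 2) < INR n).
    { assert (0 < exp 8 * (p * (1 - p)) / eta ^ 2) by (apply Rdiv_lt_0_compat; [apply Rmult_lt_0_compat; [apply exp_pos| nra]| apply pow_lt; lra]). lra. }
    assert (0 < 2 * d * ln 2) by nra.
    apply Rmult_lt_reg_r with (2 * INR n * d * ln 2); [nra|]. rewrite Rinv_l by nra.
    apply Rmult_lt_reg_r with (/ (2 * d * ln 2)); [apply Rinv_0_lt_compat; lra|].
    replace (1 / 4 * (2 * INR n * d * ln 2) * / (2 * d * ln 2)) with (INR n / 4) by (field; lra).
    unfold Rdiv in H1. lra. }
  pose proof (Rle_abs (Perr n p c)). lra.
Qed.

Lemma ach_incl p RK R0 : achievable true p RK R0 -> achievable false p RK R0.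
Proof. intros [H0 [codes [Hc H]]]. split; auto. exists codes. split; auto.
  intros n; destruct (Hc n) as [A [B _]]; auto. Qed.

Theorem mainTheorem9 (p RK : R) :
  0 < p < 1 / 2 -> 0 < RK ->
  is_lub (achievable true p RK) (Hb p) /\ is_lub (achievable false p RK) (Hb p).
Proof.
  intros Hp HRK.
  assert (HH : 0 < Hb p) by (apply Hb_pos; lra).
  assert (Hleast : forall b, (forall R0, 0 <= R0 < Hb p -> R0 <= b) -> Hb p <= b).
  { intros b Hub. destruct (Rle_lt_dec (Hb p) b); auto. exfalso.
    set (R0 := (Rmax b 0 + Hb p) / 2).
    assert (Rmax b 0 >= b) by (apply Rle_ge, Rmax_l). assert (Rmax b 0 >= 0) by (apply Rle_ge, Rmax_r).
    assert (Rmax b 0 < Hb p) by (apply Rmax_lub_lt; lra).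
    assert (R0 <= b) by (apply Hub; unfold R0; lra). unfold R0 in H2. lra. }
  split; split.
  - intros R0 HR. apply (converse p RK); auto. apply ach_incl; auto.
  - intros b Hub. apply Hleast. intros R0 HR0. apply Hub. apply achievable_R0; auto; lra.
  - intros R0 HR. apply (converse p RK); auto.
  - intros b Hub. apply Hleast. intros R0 HR0. apply Hub. apply ach_incl. apply achievable_R0; auto; lra.
Qed.
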